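(* Let $M(n)$ denote the minimum, over all forcibly connected graphical degree sequences of length $n$, of the largest term of the sequence. Then $M(n)=\Omega(\sqrt{n})$; that is, there is a constant $c>0$ such that $M(n)>c\sqrt{n}$ for all sufficiently large $n$.
   Context: A graphical degree sequence of length $n$ is a non-increasing sequence of non-negative integers $d_1\ge\cdots\ge d_n$ that is the vertex degree sequence of some simple graph (finite, undirected, no loops or multiple edges) on $n$ vertices; such a graph is a realization. A graphical degree sequence is forcibly connected if every one of its realizations is connected. *)

(* Defs.v *)
From mathcomp Require Import all_boot all_order all_algebra.
Set Implicit Arguments. Unset Strict Implicit. Unset Printing Implicit Defensive.

Definition simple_graph (n : nat) (e : rel 'I_n) : Prop :=
  irreflexive e /\ symmetric e.

Definition deg (n : nat) (e : rel 'I_n) (i : 'I_n) : nat := #|[pred j | e i j]|.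

Definition realizes (n : nat) (d : seq nat) (e : rel 'I_n) : Prop :=
  simple_graph e /\ forall i : 'I_n, deg e i = nth 0 d i.

Definition graphical_seq (n : nat) (d : seq nat) : Prop :=
  size d = n /\ sorted geq d /\ exists e : rel 'I_n, realizes d e.

Definition connected_graph (n : nat) (e : rel 'I_n) : Prop :=
  forall i j : 'I_n, connect e i j.

Definition forcibly_connected (n : nat) (d : seq nat) : Prop :=
  graphical_seq n d /\ forall e : rel 'I_n, realizes d e -> connected_graph e.

(* Main.v *)
Require Import Defs.
From mathcomp Require Import all_boot all_order all_algebra.
From mathcomp Require Import reals.
From mathcomp Require Import zify ring lra.
From Stdlib Require Import Classical.
Set Implicit Arguments. Unset Strict Implicit. Unset Printing Implicit Defensive.

Definition epair (n : nat) (i j a b : 'I_n) : bool :=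
  ((i == a) && (j == b)) || ((i == b) && (j == a)).

Lemma epairC n (i j a b : 'I_n) : epair i j a b = epair j i a b.
Proof. by rewrite /epair orbC (andbC (j == a)) (andbC (j == b)). Qed.

Definition sw n (e : rel 'I_n) (p q r s : 'I_n) : rel 'I_n := fun i j =>
  if epair i j p r || epair i j q s then true
  else if epair i j p q || epair i j r s then false
  else e i j.

Lemma epair_ii n (i a b : 'I_n) : a != b -> epair i i a b = false.
Proof.
move=> ab; rewrite /epair; apply/negbTE; apply/negP => /orP[] /andP[/eqP ? /eqP ?];
  by subst; rewrite eqxx in ab.
Qed.

Lemma sw_simple n (e : rel 'I_n) p q r s :
  simple_graph e -> p != r -> q != s -> simple_graph (sw e p q r s).
Proof.
move=> [irr sym] pr qs; split.
  by move=> i; rewrite /sw /= (epair_ii _ pr) (epair_ii _ qs) /=; case: ifP => // _; exact: irr.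
by move=> i j; rewrite /sw /= !(epairC i j) sym.
Qed.

Lemma sw_p n (e : rel 'I_n) p q r s : p != q -> p != r -> p != s ->
  forall j, sw e p q r s p j = (j == r) || ((j != q) && e p j).
Proof.
move=> pq pr ps j; rewrite /sw /epair /= eqxx (negbTE pr) (negbTE pq) (negbTE ps) /=.
by rewrite ?orbF; case: (j == r); case: (j == q).
Qed.

Lemma sw_q n (e : rel 'I_n) p q r s : q != p -> q != r -> q != s ->
  forall j, sw e p q r s q j = (j == s) || ((j != p) && e q j).
Proof.
move=> pq pr ps j; rewrite /sw /epair /= eqxx (negbTE pr) (negbTE pq) (negbTE ps) /=.
by rewrite ?orbF; case: (j == s); case: (j == p).
Qed.

Lemma sw_r n (e : rel 'I_n) p q r s : r != p -> r != q -> r != s ->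
  forall j, sw e p q r s r j = (j == p) || ((j != s) && e r j).
Proof.
move=> pq pr ps j; rewrite /sw /epair /= eqxx (negbTE pr) (negbTE pq) (negbTE ps) /=.
by rewrite ?orbF; case: (j == p); case: (j == s).
Qed.

Lemma sw_s n (e : rel 'I_n) p q r s : s != p -> s != q -> s != r ->
  forall j, sw e p q r s s j = (j == q) || ((j != r) && e s j).
Proof.
move=> pq pr ps j; rewrite /sw /epair /= eqxx (negbTE pr) (negbTE pq) (negbTE ps) /=.
by rewrite ?orbF; case: (j == q); case: (j == r).
Qed.

Lemma sw_out n (e : rel 'I_n) p q r s i : i != p -> i != q -> i != r -> i != s ->
  forall j, sw e p q r s i j = e i j.
Proof.
move=> ip iq ir i_s j; rewrite /sw /epair /= (negbTE ip) (negbTE iq) (negbTE ir) (negbTE i_s) /=.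
by [].
Qed.

Lemma deg_change n (e e' : rel 'I_n) v o m : e v o -> ~~ e v m ->
  (forall j, e' v j = (j == m) || ((j != o) && e v j)) -> deg e' v = deg e v.
Proof.
move=> evo nevm H; rewrite /deg.
rewrite (eq_card (B := [predU1 m & [predD1 [pred j | e v j] & o]])); last first.
  by move=> j; rewrite !inE H.
by rewrite cardU1 [in RHS](cardD1 o) !inE evo /= (negbTE nevm) andbF.
Qed.

Lemma sw_realizes n (d : seq nat) (e : rel 'I_n) p q r s :
  realizes d e -> uniq [:: p; q; r; s] -> e p q -> e r s -> ~~ e p r -> ~~ e q s ->
  realizes d (sw e p q r s).
Proof.
move=> [sg degs] U epq ers npr nqs; move: U => /= .
rewrite !inE !negb_or -!andbA => /and3P[pq pr /andP[ps /and3P[qr qs /andP[rs _]]]].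
have [irr sym] := sg.
split; first exact: sw_simple.
move=> v; rewrite -degs.
case: (v =P p) => [->|/eqP vp].
  by apply: (deg_change (o := q) (m := r)) => //; exact: sw_p.
case: (v =P q) => [->|/eqP vq].
  apply: (deg_change (o := p) (m := s)) => //; first by rewrite sym.
  by apply: sw_q; rewrite // eq_sym.
case: (v =P r) => [->|/eqP vr].
  apply: (deg_change (o := s) (m := p)) => //; first by rewrite sym.
  by apply: sw_r; rewrite // eq_sym.
case: (v =P s) => [->|/eqP vs].
  apply: (deg_change (o := r) (m := q)) => //; first by rewrite sym.
    by rewrite sym.
  by apply: sw_s; rewrite // eq_sym.
rewrite /deg; apply: eq_card => j; rewrite !inE; exact: sw_out.
Qed.

Definition inS n (e : rel 'I_n) (S : {set 'I_n}) : {set 'I_n * 'I_n} :=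
  [set ij | (ij.1 \in S) && (ij.2 \in S) && e ij.1 ij.2].

Lemma sw_inS_sub n (e : rel 'I_n) (S : {set 'I_n}) (p q r s : 'I_n) :
  ~~ ((p \in S) && (q \in S)) -> ~~ ((r \in S) && (s \in S)) ->
  inS e S \subset inS (sw e p q r s) S.
Proof.
move=> npq nrs; apply/subsetP => [[i j]]; rewrite !inE /= => /andP[/andP[iS jS] eij].
rewrite iS jS /sw /=; case: ifP => // _; rewrite ifF //.
apply/norP; split; apply/negP; rewrite /epair => /orP[]/andP[/eqP ? /eqP ?]; subst.
- by move: npq; rewrite iS jS.
- by move: npq; rewrite iS jS.
- by move: nrs; rewrite iS jS.
- by move: nrs; rewrite iS jS.
Qed.

Lemma sw_inS_lt n (e : rel 'I_n) (S : {set 'I_n}) (p q r s : 'I_n) :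
  ~~ ((p \in S) && (q \in S)) -> ~~ ((r \in S) && (s \in S)) ->
  p \in S -> r \in S -> ~~ e p r ->
  #|inS e S| < #|inS (sw e p q r s) S|.
Proof.
move=> npq nrs pS rS npr; apply: proper_card; apply/properP; split.
  exact: sw_inS_sub.
exists (p, r); first by rewrite !inE /= pS rS /sw /epair /= !eqxx.
by rewrite !inE /= (negbTE npr) andbF.
Qed.

Definition Nb n (e : rel 'I_n) (v : 'I_n) : {set 'I_n} := [set j | e v j].

Lemma deg_Nb n (e : rel 'I_n) v : deg e v = #|Nb e v|.
Proof. by rewrite /deg /Nb; apply: eq_card => j; rewrite !inE. Qed.

Lemma card_bigcup_le n (T : {set 'I_n}) (F : 'I_n -> {set 'I_n}) :
  #|\bigcup_(t in T) F t| <= \sum_(t in T) #|F t|.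
Proof.
elim/big_rec2: _ => [|i X m _ IH]; first by rewrite cards0.
by apply: leq_trans (leq_card_setU _ _) _; rewrite leq_add2l.
Qed.

Lemma out_nb n (e : rel 'I_n) (S : {set 'I_n}) k (u w : 'I_n) :
  irreflexive e -> #|S| = k.+1 -> deg e u = k -> u \in S -> w \in S -> u != w -> ~~ e u w ->
  exists x, x \notin S /\ e u x.
Proof.
move=> irr cS du uS wS uw nuw.
have : ~~ (Nb e u \subset (S :\ u) :\ w).
  apply/negP => /subset_leq_card; rewrite -deg_Nb du.
  have wSu : w \in S :\ u by rewrite !inE eq_sym uw wS.
  move: cS; rewrite (cardsD1 u) uS (cardsD1 w (S :\ u)) wSu add1n.
  by move=> [<-]; rewrite add1n ltnn.
case/subsetPn => x; rewrite !inE => eux.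
have xw : x != w by apply: contraNneq nuw => <-.
have xu : x != u by apply: contraTneq eux => ->; rewrite irr.
by rewrite xw xu /= => xS; exists x; rewrite xS.
Qed.

Lemma step n d (e : rel 'I_n) (S : {set 'I_n}) k D (u w : 'I_n) :
  realizes d e -> #|S| = k.+1 -> (forall v, v \in S -> deg e v = k) ->
  (forall v, deg e v <= D) -> (forall v, 0 < deg e v) -> (4 * D + 3) * D.+1 < n ->
  u \in S -> w \in S -> u != w -> ~~ e u w ->
  exists e', realizes d e' /\ #|inS e S| < #|inS e' S|.
Proof.
move=> re cS degS degD deg0 nbig uS wS uw nuw.
have [[irr sym] _] := re.
have kD : k <= D by rewrite -(degS u uS).
have [x [xS eux]] := out_nb irr cS (degS u uS) uS wS uw nuw.
have [y [yS ewy]] : exists y, y \notin S /\ e w y.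
  by apply: (out_nb irr cS (degS w wS) wS uS); rewrite 1?eq_sym // sym.
pose T := S :|: [set x; y] :|: Nb e u :|: Nb e x :|: Nb e y.
have cT : #|T| <= 4 * D + 3.
  have cNb : forall v, #|Nb e v| <= D by move=> v; rewrite -deg_Nb.
  have c2 : #|[set x; y]| <= 2 by rewrite cards2; case: (x != y).
  have U2 (A B : {set 'I_n}) : #|A :|: B| <= #|A| + #|B| := leq_card_setU A B.
  have := U2 (S :|: [set x; y] :|: Nb e u :|: Nb e x) (Nb e y).
  have := U2 (S :|: [set x; y] :|: Nb e u) (Nb e x).
  have := U2 (S :|: [set x; y]) (Nb e u).
  have := U2 S [set x; y].
  have := cNb u; have := cNb x; have := cNb y; rewrite cS /T. lia.
pose W := T :|: \bigcup_(t in T) Nb e t.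
have cW : #|W| < n.
  have h1 : #|\bigcup_(t in T) Nb e t| <= #|T| * D.
    apply: leq_trans (card_bigcup_le _ _) _.
    rewrite -sum_nat_const; apply: leq_sum => t _; by rewrite -deg_Nb.
  have : #|W| <= #|T| + #|\bigcup_(t in T) Nb e t| := leq_card_setU _ _.
  have : #|T| * D <= (4 * D + 3) * D by rewrite leq_mul2r cT orbT.
  rewrite /W. nia.
have [a aW] : exists a, a \in ~: W.
  apply/card_gt0P; have := cardsC W; rewrite card_ord. lia.
have [b eab] : exists b, e a b.
  by have /card_gt0P[b] := deg0 a; exists b.
have bT : b \notin T.
  apply/negP => bT; move: aW; rewrite !inE negb_or => /andP[_ /bigcupP]; apply.
  by exists b => //; rewrite inE sym.
have aT : a \notin T by move: aW; rewrite !inE negb_or => /andP[].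
have aS : a \notin S by apply: contra aT => h; rewrite !inE h.
have bS : b \notin S by apply: contra bT => h; rewrite !inE h.
have ax : a != x by apply: contraNneq aT => ->; rewrite !inE eqxx /= ?orbT.
have ay : a != y by apply: contraNneq aT => ->; rewrite !inE eqxx /= ?orbT.
have bx : b != x by apply: contraNneq bT => ->; rewrite !inE eqxx /= ?orbT.
have nua : ~~ e u a by apply: contra aT => h; rewrite !inE h /= ?orbT.
have nya : ~~ e y a by apply: contra aT => h; rewrite !inE h /= ?orbT.
have nxb : ~~ e x b by apply: contra bT => h; rewrite !inE h /= ?orbT.
have neq : forall z z', z \in S -> z' \notin S -> z != z'.
  by move=> z z' zS; apply: contra => /eqP <-.
have ab : a != b by apply: contraTneq eab => ->; rewrite irr.
pose e1 := sw e u x a b.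
have re1 : realizes d e1.
  apply: sw_realizes => //=.
  by rewrite !inE !negb_or neq // neq // neq // /= ![x == _]eq_sym ax bx ab.
pose e2 := sw e1 u a w y.
have e1ua : e1 u a.
  by rewrite /e1 sw_p ?eqxx // ?neq // eq_sym.
have wu : w != u by rewrite eq_sym.
have e1wy : e1 w y.
  by rewrite /e1 sw_out // ?neq.
have ne1uw : ~~ e1 u w.
  by rewrite /e1 sw_p ?neq // /= (negbTE nuw) orbF neq.
have ne1ay : ~~ e1 a y.
  have au : a != u by rewrite eq_sym neq.
  rewrite /e1 sw_r //.
  rewrite sym (negbTE nya) andbF orbF eq_sym. exact: neq.
have re2 : realizes d e2.
  apply: sw_realizes => //=.
  by rewrite !inE !negb_or (neq u a) // (neq u y) // uw ay (neq w y) // (eq_sym a w) (neq w a).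
exists e2; split => //.
have h1 : #|inS e S| <= #|inS e1 S|.
  by apply: subset_leq_card; apply: sw_inS_sub; rewrite ?(negbTE xS) ?(negbTE aS) ?andbF.
have h2 : #|inS e1 S| < #|inS e2 S|.
  by apply: sw_inS_lt; rewrite ?(negbTE aS) ?(negbTE yS) ?andbF.
exact: leq_ltn_trans h1 h2.
Qed.

Lemma inS_le n (e : rel 'I_n) (S : {set 'I_n}) : #|inS e S| <= #|S| * #|S|.
Proof.
rewrite -cardsX; apply: subset_leq_card; apply/subsetP => [[i j]].
by rewrite !inE /= => /andP[/andP[-> ->]].
Qed.

Lemma clique_exists n d (e : rel 'I_n) (S : {set 'I_n}) k D :
  realizes d e -> #|S| = k.+1 -> (forall v, v \in S -> nth 0 d v = k) ->
  (forall v : 'I_n, nth 0 d v <= D) -> (forall v : 'I_n, 0 < nth 0 d v) ->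
  (4 * D + 3) * D.+1 < n ->
  exists e', realizes d e' /\ forall u w, u \in S -> w \in S -> u != w -> e' u w.
Proof.
move=> re cS dS dD d0 nbig.
pose P (e0 : rel 'I_n) := forall u w, u \in S -> w \in S -> u != w -> e0 u w.
have one : forall e0, realizes d e0 -> P e0 \/
    exists e', realizes d e' /\ #|inS e0 S| < #|inS e' S|.
  move=> e0 re0.
  case: (boolP [forall u, forall w, ((u \in S) && (w \in S) && (u != w)) ==> e0 u w]).
    move=> /forallP H; left => u w uS wS uw.
    by move: (H u) => /forallP /(_ w); rewrite uS wS uw.
  move/forallPn => [u /forallPn [w]]; rewrite negb_imply => /andP[/andP[/andP[uS wS] uw] nuw].
  have [_ dg] := re0.
  right; apply: (step (k := k) (D := D) re0 cS _ _ _ nbig uS wS uw nuw).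
  - by move=> v vS; rewrite dg dS.
  - by move=> v; rewrite dg.
  - by move=> v; rewrite dg.
suff H : forall m (e0 : rel 'I_n), realizes d e0 -> #|S| * #|S| - #|inS e0 S| <= m ->
  exists e', realizes d e' /\ P e'.
  exact: (H _ e re (leqnn _)).
elim=> [|m IH] e0 re0 hm; (case: (one e0 re0) => [Pe|[e' [re' lt]]]; first by exists e0);
  have := inS_le e' S.
- lia.
- move=> le'; apply: (IH e') => //. lia.
Qed.

Lemma disc n (e : rel 'I_n) (S : {set 'I_n}) u z :
  symmetric e -> (forall v j, v \in S -> e v j -> j \in S) -> u \in S -> z \notin S ->
  ~ connected_graph e.
Proof.
move=> sym cl uS zS conn.
have cS : closed e S.
  move=> x y exy; case xS: (x \in S); first by rewrite (cl x y).
  by apply/esym/negbTE; apply: contraFN xS => yS; apply: (cl y x) => //; rewrite sym.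
by have := closed_connect cS (conn u z); rewrite uS (negbTE zS).
Qed.


Lemma pigeon n (f : 'I_n -> nat) D : (forall v, f v <= D) -> D * D < n ->
  exists k, k < #|[set v | f v == k]|.
Proof.
move=> fD nD; apply: NNPP => H.
have H' : forall k, #|[set v | f v == k]| <= k.
  by move=> k; rewrite leqNgt; apply/negP => h; apply: H; exists k.
have cm : forall m, #|[set v | f v <= m]| <= m * m.
  elim=> [|m IH].
    have := H' 0; rewrite (@eq_card _ _ [set v | f v == 0]) // => v.
    by rewrite !inE leqn0.
  have sub : [set v | f v <= m.+1] \subset [set v | f v <= m] :|: [set v | f v == m.+1].
    by apply/subsetP => v; rewrite !inE leq_eqVlt ltnS orbC.
  have := subset_leq_card sub.
  have : #|[set v | f v <= m] :|: [set v | f v == m.+1]| <=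
     #|[set v | f v <= m]| + #|[set v | f v == m.+1]| := leq_card_setU _ _.
  have := H' m.+1. nia.
have := cm D; rewrite (@eq_card _ _ [set: 'I_n]) ?cardsT ?card_ord; first by lia.
by move=> v; rewrite !inE fD.
Qed.

Lemma key n d : forcibly_connected n d -> 2 <= n ->
  n <= (4 * head 0 d + 3) * (head 0 d).+1.
Proof.
move=> [[sz [srt [e re]]] fc] n2.
set D := head 0 d.
have dD : forall v : 'I_n, nth 0 d v <= D.
  move=> v; rewrite /D -nth0.
  have geq_tr : transitive geq by move=> a b c ba cb; apply: leq_trans cb ba.
  apply: (sorted_leq_nth geq_tr (@leqnn) 0 srt); rewrite ?inE ?sz //.
  by apply: leq_ltn_trans (ltn_ord v).
have [[irr sym] dg] := re.
have [a0 _] : exists a : 'I_n, true by exists (Ordinal (leq_trans (isT : 0 < 2) n2)).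
case: (boolP [exists v : 'I_n, nth 0 d v == 0]).
  move/existsP => [v /eqP dv0].
  have [z zS] : exists z, z \in ~: [set v].
    apply/card_gt0P; have := cardsC [set v]; rewrite card_ord cards1. lia.
  exfalso; apply: (disc (S := [set v]) (u := v) (z := z) sym _ _ _ (fc e re)).
  - move=> v' j; rewrite inE => /eqP -> evj.
    have h0 : deg e v = 0 by rewrite dg dv0.
    by have := card0_eq h0 => /(_ j); rewrite inE evj.
  - by rewrite inE.
  - by move: zS; rewrite inE.
move/existsPn => d0.
have dpos : forall v : 'I_n, 0 < nth 0 d v by move=> v; rewrite lt0n d0.
rewrite leqNgt; apply/negP => nbig.
have [k ck] := @pigeon n (fun v => nth 0 d v) D dD ltac:(nia).
move/card_geqP: ck => [s [us ss subs]].
pose S := [set x in s].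
have cS : #|S| = k.+1 by rewrite cardsE; move/card_uniqP: us => ->.
have dS : forall v, v \in S -> nth 0 d v = k.
  by move=> v; rewrite inE => /subs; rewrite inE => /eqP.
have [u uS] : exists u, u \in S.
  by apply/card_gt0P; rewrite cS.
have kD : k <= D by rewrite -(dS u uS).
have [e' [re' cl]] := clique_exists re cS dS dD dpos nbig.
have [[irr' sym'] dg'] := re'.
have [z zS] : exists z, z \in ~: S.
  apply/card_gt0P; have := cardsC S; rewrite card_ord cS. nia.
apply: (disc (S := S) (u := u) (z := z) sym' _ uS _ (fc e' re')); last first.
  by move: zS; rewrite inE.
move=> v j vS evj.
have sub : S :\ v \subset Nb e' v.
  apply/subsetP => x /setD1P [xv xS]; rewrite inE; apply: cl => //; by rewrite eq_sym.
have ceq : #|S :\ v| = #|Nb e' v|.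
  rewrite -deg_Nb dg' dS //; move: cS; rewrite (cardsD1 v) vS add1n. by case.
move/(subset_cardP ceq): sub => /(_ j); rewrite !inE evj => /andP[].
by [].
Qed.

Import Order.TTheory GRing.Theory Num.Theory.
Local Open Scope ring_scope.

Theorem theorem1 (R : realType) :
  exists c : R, 0 < c /\
  exists N : nat, forall n : nat, (N <= n)%N ->
    forall d : seq nat, forcibly_connected n d ->
      c * Num.sqrt (n%:R) < (head 0%N d)%:R.
Proof.
exists (6^-1); split; first by rewrite invr_gt0 ltr0n.
exists 8%N => n n8 d fc.
have := key fc (leq_trans (isT : (2 <= 8)%N) n8).
set D := head 0%N d => hD.
have D1 : (1 <= D)%N by nia.
have hn : (n < 36 * D * D)%N by nia.
have hs : Num.sqrt (n%:R) < 6 * D%:R :> R.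
  have h6 : 0 <= 6 * D%:R :> R by rewrite mulr_ge0 // ler0n.
  rewrite -[X in _ < X](ger0_norm h6) -sqrtr_sqr ltr_sqrt; last first.
    by rewrite exprn_gt0 // mulr_gt0 // ltr0n.
  have -> : (6 * D%:R) ^+ 2 = (36 * D * D)%N%:R :> R by rewrite !natrM expr2; ring.
  by rewrite ltr_nat.
lra.
Qed.
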